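(* Let $n\ge 1$ and let $F_n(z)$ denote the $n$-th truncation of the continued fraction $\dfrac{1}{2z+\dfrac{1}{2z+\dfrac{1}{\ddots}}}$, i.e. $F_1(z)=\dfrac{1}{2z}$ and $F_{m+1}(z)=\dfrac{1}{2z+F_m(z)}$. Let $\theta_j=\dfrac{j\pi}{n+1}$. Then $$F_n(z)=\sum_{j=1}^n\frac{\sin^2\theta_j}{(n+1)\,(z-i\cos\theta_j)}.$$ *)

(* Defs.v *)
From Stdlib Require Import Reals.
From Coquelicot Require Import Coquelicot.
Open Scope R_scope.

Fixpoint cf_trunc (m : nat) (z : C) : C :=
  match m with
  | O => 0%C
  | S k => Cinv (Cplus (Cmult (RtoC 2) z) (cf_trunc k z))
  end.

(* Main.v *)
Require Import Defs.
From Stdlib Require Import Reals Lia Lra.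
From Coquelicot Require Import Coquelicot.
Open Scope R_scope.

Lemma Ci2 : (Ci * Ci = - 1)%C.
Proof. apply injective_projections; simpl; ring. Qed.

Lemma sum_linC (f g h : nat -> C) (a b : C) n :
  sum_n_m (fun j => (a * f j - b * (g j + h j))%C) 1 n =
  (a * sum_n_m f 1 n - b * (sum_n_m g 1 n + sum_n_m h 1 n))%C.
Proof.
  induction n as [|n IH].
  - rewrite !sum_n_m_zero by lia. change (@zero C_AbelianMonoid) with (RtoC 0).
    match goal with |- ?x = ?y => change (@eq C x y) end. ring.
  - rewrite !sum_n_Sm by lia. rewrite IH. change (@plus C_AbelianMonoid) with Cplus.
    match goal with |- ?x = ?y => change (@eq C x y) end. ring.
Qed.

Lemma sum_RtoC (f : nat -> R) n :
  sum_n_m (fun j => RtoC (f j)) 1 n = RtoC (sum_n_m f 1 n).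
Proof.
  induction n as [|n IH].
  - rewrite !sum_n_m_zero by lia. reflexivity.
  - rewrite !sum_n_Sm by lia. rewrite IH. change (@plus C_AbelianMonoid) with Cplus.
    change (@plus R_AbelianMonoid) with Rplus. now rewrite RtoC_plus.
Qed.

Lemma sum_linR (f g : nat -> R) (a b : R) n :
  sum_n_m (fun j => a * f j - b * g j) 1 n = a * sum_n_m f 1 n - b * sum_n_m g 1 n.
Proof.
  induction n as [|n IH].
  - rewrite !sum_n_m_zero by lia. change (@zero R_AbelianMonoid) with 0.
    match goal with |- ?x = ?y => change (@eq R x y) end. ring.
  - rewrite !sum_n_Sm by lia. rewrite IH. change (@plus R_AbelianMonoid) with Rplus.
    match goal with |- ?x = ?y => change (@eq R x y) end. ring.
Qed.

Lemma tele (b : R) n :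
  2 * sin (b/2) * sum_n_m (fun j => cos (INR j * b)) 1 n = sin ((INR n + /2) * b) - sin (b/2).
Proof.
  induction n as [|n IH].
  - rewrite !sum_n_m_zero by lia. change (@zero R_AbelianMonoid) with 0.
    match goal with |- ?x = ?y => change (@eq R x y) end. simpl.
    replace ((0 + /2) * b) with (b/2) by field. ring.
  - rewrite !sum_n_Sm by lia. change (@plus R_AbelianMonoid) with Rplus.
    match goal with |- ?x = ?y => change (@eq R x y) end.
    rewrite Rmult_plus_distr_l, IH. rewrite S_INR.
    replace ((INR n + /2) * b) with ((INR n + 1) * b - b/2) by field.
    replace ((INR n + 1 + /2) * b) with ((INR n + 1) * b + b/2) by field.
    rewrite sin_plus, sin_minus. ring.
Qed.

Lemma sinpi m x : sin (INR m * PI + x) = (-1) ^ m * sin x.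
Proof.
  induction m as [|m IH].
  - simpl. rewrite Rmult_0_l, Rplus_0_l. ring.
  - rewrite S_INR. replace ((INR m + 1) * PI + x) with ((INR m * PI + x) + PI) by ring.
    rewrite neg_sin, IH. simpl. ring.
Qed.

Lemma cossum n m : (1 <= n)%nat -> (0 < m)%nat -> (m < 2 * (n+1))%nat ->
  sum_n_m (fun j => cos (INR m * (INR j * PI / INR (n+1)))) 1 n = - (1 + (-1)^m) / 2.
Proof.
  intros Hn Hm0 Hm1.
  set (b := INR m * PI / INR (n+1)).
  assert (HN : 0 < INR (n+1)) by (apply lt_0_INR; lia).
  assert (Hmr : 0 < INR m) by (apply lt_0_INR; lia).
  assert (Hm2 : INR m < 2 * INR (n+1)).
  { replace 2 with (INR 2) by reflexivity. rewrite <- mult_INR. apply lt_INR. lia. }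
  rewrite (sum_n_m_ext_loc _ (fun j => cos (INR j * b))).
  2:{ intros k _. f_equal. unfold b. field. lra. }
  assert (Hh : 0 < sin (b/2)).
  { pose proof PI_RGT_0. apply sin_gt_0.
    - unfold b. apply Rdiv_lt_0_compat; [|lra]. apply Rdiv_lt_0_compat; nra.
    - set (q := b/2). assert (q * (2 * INR (n+1)) = INR m * PI) by (unfold q, b; field; lra).
      nra. }
  pose proof (tele b n) as T.
  replace ((INR n + /2) * b) with (INR m * PI + - (b/2)) in T.
  2:{ unfold b. rewrite plus_INR. pose proof (pos_INR n). simpl. field. lra. }
  rewrite sinpi, sin_neg in T.
  apply (Rmult_eq_reg_l (2 * sin (b/2))); [|lra].
  rewrite T. field.
Qed.

Lemma prod_cos k x : 2 * sin x * sin (INR (S k) * x) = cos (INR k * x) - cos (INR (S (S k)) * x).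
Proof.
  rewrite !S_INR.
  replace (INR k * x) with ((INR k + 1) * x - x) by ring.
  replace ((INR k + 1 + 1) * x) with ((INR k + 1) * x + x) by ring.
  rewrite cos_minus, cos_plus. ring.
Qed.

Lemma sin3 k x : sin (INR k * x) + sin (INR (S (S k)) * x) = 2 * cos x * sin (INR (S k) * x).
Proof.
  rewrite !S_INR.
  replace (INR k * x) with ((INR k + 1) * x - x) by ring.
  replace ((INR k + 1 + 1) * x) with ((INR k + 1) * x + x) by ring.
  rewrite sin_minus, sin_plus. ring.
Qed.

Definition th n j := INR j * PI / INR (n+1).

Lemma orth_split n k :
  sum_n_m (fun j => 2 * sin (th n j) * sin (INR (S k) * th n j)) 1 n =
  sum_n_m (fun j => cos (INR k * th n j)) 1 n - sum_n_m (fun j => cos (INR (S (S k)) * th n j)) 1 n.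
Proof.
  rewrite (sum_n_m_ext_loc _ (fun j => 1 * cos (INR k * th n j) - 1 * cos (INR (S (S k)) * th n j))).
  - rewrite sum_linR. match goal with |- ?x = ?y => change (@eq R x y) end. ring.
  - intros j _. rewrite prod_cos. match goal with |- ?x = ?y => change (@eq R x y) end. ring.
Qed.

Lemma orth0 n : (1 <= n)%nat ->
  sum_n_m (fun j => 2 * sin (th n j) * sin (INR 1 * th n j)) 1 n = INR (n+1).
Proof.
  intros Hn. rewrite orth_split. unfold th. rewrite (cossum n 2) by lia.
  rewrite (sum_n_m_ext_loc _ (fun _ => 1)).
  - rewrite sum_n_m_const. replace (S n - 1)%nat with n by lia. rewrite plus_INR. simpl.
    match goal with |- ?x = ?y => change (@eq R x y) end. field.
  - intros j _. simpl. rewrite Rmult_0_l. apply cos_0.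
Qed.

Lemma orthk n k : (1 <= k)%nat -> (S k <= n)%nat ->
  sum_n_m (fun j => 2 * sin (th n j) * sin (INR (S k) * th n j)) 1 n = 0.
Proof.
  intros Hk Hkn. rewrite orth_split. unfold th. rewrite !cossum by lia.
  simpl. match goal with |- ?x = ?y => change (@eq R x y) end. field.
Qed.

Lemma back (n : nat) (z : C) (y : nat -> C)
  (hdef : forall m : nat, (m < n)%nat -> Cplus (Cmult (RtoC 2) z) (cf_trunc m z) <> RtoC 0)
  (hy : y (S n) = RtoC 0)
  (hr : forall k, (1 <= k)%nat -> (S k <= n)%nat ->
        Cmult (Cmult (RtoC 2) z) (y (S k)) = Cmult Ci (Cplus (y k) (y (S (S k))))) :
  forall m k, (m < n)%nat -> (k + m = n)%nat ->
    Cmult (Copp Ci) (y (S k)) = Cmult (cf_trunc m z) (y k).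
Proof.
  induction m as [|m IH]; intros k Hm Hkm.
  - replace k with n by lia. rewrite hy. simpl. ring.
  - pose proof (IH (S k) ltac:(lia) ltac:(lia)) as I.
    pose proof (hr k ltac:(lia) ltac:(lia)) as Rk.
    pose proof (hdef m ltac:(lia)) as D.
    simpl cf_trunc.
    assert (E : y k = Cmult (Cmult (Copp Ci) (y (S k))) (Cplus (Cmult (RtoC 2) z) (cf_trunc m z))).
    { transitivity (Cminus (Cmult (Copp Ci) (Cmult (Cmult (RtoC 2) z) (y (S k))))
                           (Cmult Ci (Cmult (cf_trunc m z) (y (S k))))).
      2: ring.
      rewrite Rk, <- I.
      transitivity (Cplus (Cmult (Copp (Cmult Ci Ci)) (Cplus (y k) (y (S (S k)))))
                          (Cmult (Cmult Ci Ci) (y (S (S k))))).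
      - rewrite Ci2. ring.
      - ring. }
    rewrite E. field. exact D.
Qed.

Lemma invmul (D w : C) : D <> RtoC 0 -> w = Cmult (Cinv D) (Cmult D w).
Proof. intros. field. assumption. Qed.

Theorem lemma2 (n : nat) (z : C) (hn : (1 <= n)%nat)
  (hdef : forall m : nat, (m < n)%nat ->
            Cplus (Cmult (RtoC 2) z) (cf_trunc m z) <> RtoC 0) :
  cf_trunc n z =
  sum_n_m (fun j : nat =>
      Cdiv (RtoC (sin (INR j * PI / INR (n + 1)) ^ 2))
           (Cmult (RtoC (INR (n + 1)))
                  (Cminus z (Cmult Ci (RtoC (cos (INR j * PI / INR (n + 1))))))))
    1 n.
Proof.
  destruct n as [|p]; [lia|].
  assert (HNr : 0 < INR (S p + 1)) by (apply lt_0_INR; lia).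
  assert (HN : RtoC (INR (S p + 1)) <> RtoC 0).
  { intro H. apply (f_equal fst) in H. cbn [fst RtoC] in H. lra. }
  assert (Hsin : forall j, (1 <= j <= S p)%nat -> 0 < sin (th (S p) j)).
  { intros j Hj. pose proof PI_RGT_0. unfold th.
    assert (0 < INR j) by (apply lt_0_INR; lia).
    assert (INR j < INR (S p + 1)) by (apply lt_INR; lia).
    apply sin_gt_0.
    - apply Rdiv_lt_0_compat; nra.
    - set (q := INR j * PI / INR (S p + 1)).
      assert (q * INR (S p + 1) = INR j * PI) by (unfold q; field; lra). nra. }
  assert (HsinN : forall j, sin (INR (S (S p)) * th (S p) j) = 0).
  { intros j. unfold th. replace (INR (S p + 1)) with (INR (S (S p))) by (f_equal; lia).
    replace (INR (S (S p)) * (INR j * PI / INR (S (S p)))) with (INR j * PI + 0).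
    - rewrite sinpi, sin_0. ring.
    - field. replace (INR (S (S p))) with (INR (S p + 1)) by (f_equal; lia). lra. }
  set (d := fun j => Cminus z (Cmult Ci (RtoC (cos (th (S p) j))))).
  assert (Hd : forall j, (1 <= j <= S p)%nat -> d j <> RtoC 0).
  { intros j Hj Hz.
    set (c := cos (th (S p) j)).
    assert (Ez : z = Cmult Ci (RtoC c)).
    { transitivity (Cplus (d j) (Cmult Ci (RtoC c))); [unfold d, c; ring | rewrite Hz; ring]. }
    set (e := fun k => RtoC (sin (INR k * th (S p) j))).
    assert (rec : forall k, Cmult (Cmult (RtoC 2) z) (e (S k)) = Cmult Ci (Cplus (e k) (e (S (S k))))).
    { intros k. rewrite Ez. unfold e. rewrite <- RtoC_plus, sin3, !RtoC_mult. unfold c. ring. }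
    assert (eN : e (S (S p)) = RtoC 0) by (unfold e; rewrite HsinN; reflexivity).
    pose proof (back (S p) z e hdef eN (fun k _ _ => rec k) p 1 ltac:(lia) ltac:(lia)) as B.
    pose proof (rec 0%nat) as R0.
    assert (e0 : e 0%nat = RtoC 0) by (unfold e; simpl; rewrite Rmult_0_l, sin_0; reflexivity).
    rewrite e0 in R0.
    assert (e1 : e 1%nat <> RtoC 0).
    { unfold e. intro H. apply (f_equal fst) in H. simpl in H.
      pose proof (Hsin j Hj). rewrite Rmult_1_l in H. lra. }
    apply (hdef p ltac:(lia)).
    assert (P : Cmult (Cplus (Cmult (RtoC 2) z) (cf_trunc p z)) (e 1%nat) = RtoC 0).
    { transitivity (Cplus (Cmult (Cmult (RtoC 2) z) (e 1%nat)) (Cmult (cf_trunc p z) (e 1%nat))).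
      - ring.
      - rewrite R0, <- B. ring. }
    transitivity (Cdiv (Cmult (Cplus (Cmult (RtoC 2) z) (cf_trunc p z)) (e 1%nat)) (e 1%nat)).
    - field. exact e1.
    - rewrite P. field. exact e1. }
  set (y := fun k => sum_n_m (fun j => Cdiv (RtoC (sin (th (S p) j) * sin (INR k * th (S p) j)))
                                       (Cmult (RtoC (INR (S p + 1))) (d j))) 1 (S p)).
  assert (Key : forall k, (S k <= S p)%nat ->
     Cminus (Cmult (Cmult (RtoC 2) z) (y (S k))) (Cmult Ci (Cplus (y k) (y (S (S k))))) =
     RtoC (sum_n_m (fun j => 2 * sin (th (S p) j) * sin (INR (S k) * th (S p) j)) 1 (S p) / INR (S p + 1))).
  { intros k Hk. unfold y. rewrite <- sum_linC.
    rewrite (sum_n_m_ext_loc _ (fun j => RtoC (/ INR (S p + 1) * (2 * sin (th (S p) j) * sin (INR (S k) * th (S p) j)) - 0 * 0))).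
    - rewrite sum_RtoC, sum_linR. f_equal. field. lra.
    - intros j Hj. pose proof (Hd j Hj) as Hdj.
      assert (S3 : sin (th (S p) j) * sin (INR k * th (S p) j) =
         sin (th (S p) j) * (2 * cos (th (S p) j) * sin (INR (S k) * th (S p) j)) -
         sin (th (S p) j) * sin (INR (S (S k)) * th (S p) j)).
      { rewrite <- sin3. ring. }
      rewrite S3. rewrite !RtoC_minus, !RtoC_mult. unfold d in *.
      match goal with |- ?x = ?y => change (@eq C x y) end. cbv beta in *. rewrite RtoC_inv by lra. field. split; assumption. }
  assert (y0 : y 0%nat = RtoC 0).
  { unfold y. rewrite (sum_n_m_ext_loc _ (fun _ => RtoC 0)).
    - rewrite (sum_RtoC (fun _ => 0)), sum_n_m_const. f_equal. ring.
    - intros j Hj. simpl. rewrite Rmult_0_l, sin_0, Rmult_0_r. pose proof (Hd j Hj). match goal with |- ?x = ?y => change (@eq C x y) end. field. split; assumption. }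
  assert (yN : y (S (S p)) = RtoC 0).
  { unfold y. rewrite (sum_n_m_ext_loc _ (fun _ => RtoC 0)).
    - rewrite (sum_RtoC (fun _ => 0)), sum_n_m_const. f_equal. ring.
    - intros j Hj. rewrite HsinN, Rmult_0_r. pose proof (Hd j Hj). match goal with |- ?x = ?y => change (@eq C x y) end. field. split; assumption. }
  assert (rec : forall k, (1 <= k)%nat -> (S k <= S p)%nat ->
        Cmult (Cmult (RtoC 2) z) (y (S k)) = Cmult Ci (Cplus (y k) (y (S (S k))))).
  { intros k Hk1 Hk2. pose proof (Key k Hk2) as K. rewrite orthk in K by lia.
    transitivity (Cplus (Cminus (Cmult (Cmult (RtoC 2) z) (y (S k))) (Cmult Ci (Cplus (y k) (y (S (S k))))))
                        (Cmult Ci (Cplus (y k) (y (S (S k)))))).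
    - ring.
    - rewrite K. replace (0 / INR (S p + 1)) with 0 by (field; lra). ring. }
  pose proof (back (S p) z y hdef yN rec p 1 ltac:(lia) ltac:(lia)) as B.
  pose proof (Key 0%nat ltac:(lia)) as K0. rewrite orth0 in K0 by lia.
  replace (INR (S p + 1) / INR (S p + 1)) with 1 in K0 by (field; lra).
  rewrite y0 in K0.
  assert (E1 : Cmult (Cplus (Cmult (RtoC 2) z) (cf_trunc p z)) (y 1%nat) = RtoC 1).
  { rewrite <- K0.
    transitivity (Cplus (Cmult (Cmult (RtoC 2) z) (y 1%nat)) (Cmult (cf_trunc p z) (y 1%nat))).
    - ring.
    - rewrite <- B. ring. }
  transitivity (y 1%nat : C).
  - simpl cf_trunc. pose proof (hdef p ltac:(lia)) as D.
    match goal with |- ?x = ?y => change (@eq C x y) end.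
    symmetry. transitivity (Cmult (Cinv (Cplus (Cmult (RtoC 2) z) (cf_trunc p z)))
       (Cmult (Cplus (Cmult (RtoC 2) z) (cf_trunc p z)) (y 1%nat))).
    + apply invmul. exact D.
    + rewrite E1. ring.
  - unfold y, d, th. apply sum_n_m_ext_loc. intros j _. f_equal. f_equal.
    change (INR 1) with 1. match goal with |- ?x = ?y => change (@eq R x y) end. rewrite Rmult_1_l. ring.
Qed.
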